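(* Let $G=(V,E)$ be a connected graph with at least two vertices. Call a multiset $\mathcal{D}$ of edges of $G$ a domino covering if every vertex is an endpoint of some edge of $\mathcal{D}$, and call it saturated if removing any single edge from $\mathcal{D}$ leaves some vertex not an endpoint of any remaining edge. Then the maximum number of edges in a saturated domino covering of $G$ equals $|V| - \gamma(G)$, where $\gamma(G)$ is the domination number of $G$ (the minimum number of vertex sets of star subgraphs of $G$ needed to cover $V$). *)

(* Defs.v *)
(* A finite simple graph is a finType T of vertices with a
   symmetric irreflexive adjacency relation e : rel T. *)
From mathcomp Require Import all_boot all_order.
Set Implicit Arguments. Unset Strict Implicit. Unset Printing Implicit Defensive.

(* A (multiset of) edges is represented as a sequence of vertex pairs, each of
   which must be an edge of the graph; repetitions are allowed (multiset). *)
Definition edge_multiset (T : finType) (e : rel T) (D : seq (T * T)) : bool :=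
  all (fun d => e d.1 d.2) D.

Definition covers (T : finType) (D : seq (T * T)) : bool :=
  [forall v : T, has (fun d => (v == d.1) || (v == d.2)) D].

Definition domino_covering (T : finType) (e : rel T) (D : seq (T * T)) : bool :=
  edge_multiset e D && covers D.

Definition saturated (T : finType) (D : seq (T * T)) : bool :=
  all (fun d => ~~ covers (rem d D)) D.

Definition dominating (T : finType) (e : rel T) (S : {set T}) : bool :=
  [forall v : T, (v \in S) || [exists u in S, e u v]].

(* domination number: minimum size of a dominating set ([set: T] is dominating) *)
Definition domination_number (T : finType) (e : rel T) : nat :=
  #|[arg min_(S < [set: T] | dominating e S) #|S| ]|.

(* Main.v *)
Require Import Defs.
From mathcomp Require Import all_boot all_order zify.
Set Implicit Arguments. Unset Strict Implicit. Unset Printing Implicit Defensive.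

Section S.
Variables (T : finType) (e : rel T).
Hypotheses (e_sym : symmetric e) (e_irr : irreflexive e).

Definition cov (v : T) (d : T * T) := (v == d.1) || (v == d.2).

Lemma uniq_of_rem (s : seq (T * T)) :
  (forall d, d \in s -> d \notin rem d s) -> uniq s.
Proof.
elim: s => [//|x s IH H] /=.
have Hx := H x (mem_head _ _). rewrite /= eqxx in Hx. rewrite Hx /=.
apply: IH => d ds. have hd : d \in x :: s by apply/orP; right.
move: (H d hd) => /=.
case: eqP => [E|_]; first by rewrite E ds in Hx.
by rewrite in_cons negb_or => /andP[].
Qed.

Lemma gamma_le (S : {set T}) : dominating e S -> domination_number e <= #|S|.
Proof.
move=> dS; rewrite /domination_number.
case: arg_minnP => [|A _ H]; last exact: H.
by apply/forallP => v; rewrite in_setT.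
Qed.

Lemma upper (D : seq (T * T)) :
  domino_covering e D -> saturated D -> size D <= #|T| - domination_number e.
Proof.
case/andP => /allP edD /forallP covD /allP satD.
have priv : forall d, d \in D -> exists v, cov v d && ~~ has (cov v) (rem d D).
  move=> d dD; have := satD d dD => /forallPn [v Hv].
  exists v; rewrite Hv andbT.
  have /hasP [x xD cx] := covD v.
  have [xd|xd] := eqVneq x d; first by rewrite -xd.
  by move: Hv => /hasPn /(_ x (rem_mem xd xD)); rewrite /cov cx.
have uD : uniq D.
  apply: uniq_of_rem => d dD; have [v /andP[cv /hasPn H]] := priv d dD.
  by apply/negP => /H; rewrite cv.
pose p d := if [pick v | cov v d && ~~ has (cov v) (rem d D)] is Some v then v else d.1.
have pP : forall d, d \in D -> cov (p d) d && ~~ has (cov (p d)) (rem d D).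
  move=> d dD; rewrite /p; case: pickP => [v //|H].
  by have [v Hv] := priv d dD; rewrite H in Hv.
have pinj : {in D &, injective p}.
  move=> d1 d2 d1D d2D E; apply/eqP; apply/negPn/negP => ne.
  have := pP d1 d1D => /andP[_ /hasPn /(_ d2)].
  rewrite rem_mem // 1?eq_sym // E => /(_ isT).
  by case/andP: (pP d2 d2D) => ->.
have uM : uniq (map p D) by rewrite map_inj_in_uniq.
pose S := ~: [set x in map p D].
have cS : #|S| = #|T| - size D.
  by rewrite cardsCs setCK cardsE (card_uniqP uM) size_map.
have domS : dominating e S.
  apply/forallP => v; rewrite !inE; case: (boolP (v \in map p D)) => //= /mapP [d dD vE].
  apply/existsP.
  have ed := edD d dD.
  have nd : d.1 != d.2 by apply/negP => /eqP E; rewrite E e_irr in ed.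
  have /andP [cv /hasPn hv] := pP d dD.
  pose q := if v == d.1 then d.2 else d.1.
  have eqv : e q v.
    rewrite /q; move: cv; rewrite /cov vE; case: eqP => [->|_] /= H.
      by rewrite e_sym.
    by rewrite (eqP H).
  have qv : q != v.
    rewrite /q; move: cv; rewrite /cov vE; case: eqP => [->|_] /= H.
      by rewrite eq_sym.
    by rewrite (eqP H).
  exists q; rewrite !inE eqv andbT; apply/negP => /mapP [d' d'D qE].
  have [dd|dd] := eqVneq d' d.
    by move: qv; rewrite qE dd -vE eqxx.
  have /andP [_ /hasPn /(_ d)] := pP d' d'D.
  rewrite (rem_mem _ dD) ?(eq_sym d) // -qE /cov /q.
  by case: ifP => _ /(_ isT); rewrite eqxx ?orbT.
have leT : size D <= #|T|.
  by rewrite -(size_map p) -(card_uniqP uM) max_card.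
have := gamma_le domS; rewrite cS; lia.
Qed.

Definition okf (f : T -> T) := forall v, f v != v -> e v (f v) && (f (f v) == f v).
Definition cen (f : T -> T) := [set x | f x == x].
Definition badf (f : T -> T) := [set x | (f x == x) && [forall v, (v != x) ==> (f v != x)]].

Lemma build f : okf f -> badf f = set0 ->
  exists D, [/\ domino_covering e D, saturated D & size D = #|T| - #|cen f|].
Proof.
move=> okf0 bad0.
pose L := [seq v <- enum T | f v != v].
have uL : uniq L by rewrite filter_uniq ?enum_uniq.
have mL : forall v, (v \in L) = (f v != v) by move=> v; rewrite mem_filter mem_enum andbT.
pose D := map (fun v => (v, f v)) L.
have uD : uniq D by rewrite map_inj_uniq // => x y [].
exists D; split.
- apply/andP; split.
    by apply/allP => d /mapP [v vL ->] /=; rewrite mL in vL; case/andP: (okf0 v vL).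
  apply/forallP => v; apply/hasP.
  case: (boolP (f v != v)) => [fv|].
    by exists (v, f v); [apply/mapP; exists v; rewrite ?mL | rewrite /= eqxx].
  rewrite negbK => /eqP fv.
  have : v \notin badf f by rewrite bad0 inE.
  rewrite inE fv eqxx /= => /forallPn [u]; rewrite negb_imply negbK => /andP [uv /eqP fu].
  exists (u, f u); last by rewrite /= fu eqxx orbT.
  by apply/mapP; exists u; rewrite // mL fu eq_sym.
- apply/allP => d /mapP [v vL ->]; apply/negP => /forallP /(_ v) /hasP [x xD].
  have := xD; rewrite mem_rem_uniq // inE => /andP [xd /mapP [u uL2 xE]].
  move: xd; rewrite xE /= => ne.
  rewrite mL in vL; rewrite mL in uL2.
  case/orP => /eqP E.
    by move: ne; rewrite E eqxx.
  case/andP: (okf0 u uL2) => _ /eqP ffu.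
  by move: vL; rewrite E ffu -E eqxx.
- rewrite size_map -(card_uniqP uL) -(cardsC (cen f)) addKn.
  by apply: eq_card => v; rewrite !inE mL.
Qed.

Lemma improve f s w : okf f -> s \in badf f -> e s w ->
  exists g, [/\ okf g, cen g \subset w |: (cen f :\ s) & badf g \subset badf f :\ s].
Proof.
move=> okf0; rewrite inE => /andP [/eqP fs /forallP nos0] esw.
have nos : forall v, v != s -> f v != s by move=> v; move/implyP: (nos0 v).
have ws : w != s by apply/negP => /eqP E; rewrite E e_irr in esw.
have sw : s != w by rewrite eq_sym.
have [fw|fw] := eqVneq (f w) w.
- exists (fun v => if v == s then w else f v); split.
  + move=> v /=; have [->|vs] := eqVneq v s.
      by rewrite (negbTE ws) fw esw eqxx.
    move=> fv; rewrite (negbTE (nos v vs)); exact: okf0.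
  + apply/subsetP => x; rewrite !inE; have [->|xs] := eqVneq x s.
      by rewrite (negbTE ws).
    by move=> ->; rewrite orbT.
  + apply/subsetP => x; rewrite !inE; have [->|xs] := eqVneq x s.
      by rewrite (negbTE ws).
    move=> /andP [-> /forallP H] /=; apply/forallP => v; apply/implyP => vx.
    have [vs|vs] := eqVneq v s; first by rewrite vs fs eq_sym.
    by move/implyP: (H v) => /(_ vx); rewrite (negbTE vs).
- have fvw : forall v, f v != v -> f v != w.
    move=> v fv; case/andP: (okf0 v fv) => _ /eqP ffv.
    by apply/negP => /eqP E; move: ffv; rewrite E => /eqP; rewrite (negbTE fw).
  case/andP: (okf0 w fw) => ewc /eqP fc.
  have cs : f w != s by apply: nos; rewrite ws.
  have [ex|nex] := boolP [exists v0, [&& v0 != w, v0 != f w & f v0 == f w]].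
  + case/existsP: ex => v0 /and3P [v0w v0c /eqP fv0].
    exists (fun v => if v == s then w else if v == w then w else f v); split.
    * move=> v /=; have [->|vs] := eqVneq v s.
        by rewrite (negbTE ws) eqxx esw eqxx.
      have [->|vw] := eqVneq v w; first by rewrite (negbTE ws) eqxx.
      move=> fv; case/andP: (okf0 v fv) => -> ffv.
      by rewrite (negbTE (nos v vs)) (negbTE (fvw v fv)).
    * apply/subsetP => x; rewrite !inE; have [->|xs] := eqVneq x s.
        by rewrite (negbTE ws).
      have [->|xw] := eqVneq x w; first by rewrite eqxx.
      by move=> ->.
    * apply/subsetP => x; rewrite !inE; have [->|xs] := eqVneq x s.
        by rewrite (negbTE ws).
      have [->|xw] := eqVneq x w.
        by move=> /andP [_ /forallP /(_ s) /implyP]; rewrite sw !eqxx => /(_ isT).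
      move=> /andP [-> /forallP H] /=; apply/forallP => v; apply/implyP => vx.
      have [vs|vs] := eqVneq v s; first by rewrite vs fs eq_sym.
      have [vw|vw] := eqVneq v w.
        rewrite vw; apply/negP => /eqP E.
        have v0s : v0 != s by apply/negP => /eqP E2; move: fv0; rewrite E2 fs => E3; move: cs; rewrite -E3 eqxx.
        move/implyP: (H v0); rewrite -E v0c (negbTE v0s) (negbTE v0w) fv0 eqxx.
        by move=> /(_ isT).
      by move/implyP: (H v) => /(_ vx); rewrite (negbTE vs) (negbTE vw).
  + have nc : forall v, v != w -> v != f w -> f v != f w.
      move=> v vw vc; apply/negP => E; move/existsP: nex; apply; exists v.
      by rewrite vw vc E.
    exists (fun v => if (v == s) || (v == w) || (v == f w) then w else f v); split.
    * move=> v /=; have [->|vs] := eqVneq v s.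
        by move=> _; rewrite /= esw eqxx !orbT /= eqxx.
      have [->|vw] := eqVneq v w; first by rewrite orbT /= eqxx.
      have [vc|vc] := eqVneq v (f w).
        by rewrite vc e_sym ewc /= eqxx orbT.
      move=> fv /=; case/andP: (okf0 v fv) => -> ffv.
      by rewrite (negbTE (nos v vs)) (negbTE (fvw v fv)) (negbTE (nc v vw vc)).
    * apply/subsetP => x; rewrite !inE; have [->|xs] := eqVneq x s.
        by rewrite /= (negbTE ws).
      have [->|xw] := eqVneq x w; first by rewrite eqxx.
      have [->|xc] := eqVneq x (f w); first by rewrite /= eq_sym (negbTE fw).
      by move=> /= ->.
    * apply/subsetP => x; rewrite !inE; have [->|xs] := eqVneq x s.
        by rewrite /= (negbTE ws).
      have [->|xw] := eqVneq x w.
        by move=> /andP [_ /forallP /(_ s) /implyP]; rewrite sw !eqxx => /(_ isT).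
      have [->|xc] := eqVneq x (f w).
        by rewrite /= eq_sym (negbTE fw).
      move=> /= /andP [-> /forallP H] /=; apply/forallP => v; apply/implyP => vx.
      have [vs|vs] := eqVneq v s; first by rewrite vs fs eq_sym.
      have [vw|vw] := eqVneq v w; first by rewrite vw eq_sym.
      have [vc|vc] := eqVneq v (f w); first by rewrite vc fc eq_sym.
      by move/implyP: (H v) => /(_ vx); rewrite (negbTE vs) (negbTE vw) (negbTE vc).
Qed.

Lemma card_step (A : {set T}) s w : s \in A -> #|w |: (A :\ s)| <= #|A|.
Proof. by move=> sA; rewrite cardsU1 (cardsD1 s A) sA; case: (_ \notin _). Qed.

Hypothesis nbr : forall s, exists w, e s w.

Lemma fix_bad n f : okf f -> #|badf f| <= n ->
  exists g, [/\ okf g, #|cen g| <= #|cen f| & badf g = set0].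
Proof.
elim: n f => [|n IH] f okf0 hb.
  exists f; split => //; apply/eqP; rewrite -cards_eq0; by move: hb; rewrite leqn0.
have [b0|/set0Pn [s sb]] := eqVneq (badf f) set0; first by exists f.
have [w esw] := nbr s.
have [g [okg cg bg]] := improve okf0 sb esw.
have sc : s \in cen f by move: sb; rewrite !inE => /andP[].
have hbg : #|badf g| <= n.
  move: hb; rewrite (cardsD1 s (badf f)) sb add1n ltnS; apply: leq_trans.
  exact: subset_leq_card.
have [h [okh ch bh]] := IH g okg hbg.
exists h; split => //; apply: (leq_trans ch); apply: leq_trans (card_step w sc).
exact: subset_leq_card.
Qed.
End S.

Theorem mainTheorem16 (T : finType) (e : rel T)
  (e_sym : symmetric e) (e_irr : irreflexive e)
  (e_conn : forall x y : T, connect e x y)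
  (two_vertices : 1 < #|T|) :
  (exists D : seq (T * T),
      [/\ domino_covering e D, saturated D & size D = #|T| - domination_number e]) /\
  (forall D : seq (T * T),
      domino_covering e D -> saturated D -> size D <= #|T| - domination_number e).
Proof.
have UB := upper e_sym e_irr.
split => //.
have nbr : forall s, exists w, e s w.
  move=> s; have [x [y [_ _ xy]]] := card_gt1P two_vertices.
  pose y' := if x == s then y else x.
  have ys : y' != s.
    rewrite /y'; have [xs|xs] := eqVneq x s => //; by rewrite -xs eq_sym.
  move/connectP: (e_conn s y') => [[|w p] /= P L].
    by rewrite L eqxx in ys.
  by exists w; case/andP: P.
have [S0 domS0 minS0] : exists2 S0 : {set T}, dominating e S0 & #|S0| = domination_number e.
  rewrite /domination_number; case: arg_minnP.
    by apply/forallP => v; rewrite in_setT.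
  by move=> A dA _; exists A.
pose f0 := fun v => if v \in S0 then v else odflt v [pick u in S0 | e u v].
have f0S : forall v, v \in S0 -> f0 v = v by move=> v vS; rewrite /f0 vS.
have f0N : forall v, v \notin S0 -> exists2 u, u \in S0 & e u v /\ f0 v = u.
  move=> v vS; rewrite /f0 (negbTE vS); case: pickP => [u /andP [uS euv]|H].
    by exists u.
  by move/forallP: domS0 => /(_ v); rewrite (negbTE vS) /= => /existsP [u]; rewrite H.
have okf0 : okf e f0.
  move=> v; case: (boolP (v \in S0)) => vS; first by rewrite f0S ?eqxx.
  have [u uS [euv ->]] := f0N v vS.
  by rewrite -e_sym euv f0S ?eqxx.
have cf0 : cen f0 \subset S0.
  apply/subsetP => x; rewrite inE; case: (boolP (x \in S0)) => // xS.
  have [u uS [_ ->]] := f0N x xS.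
  by move=> /eqP E; rewrite -E uS in xS.
have [g [okg cg bg]] := fix_bad e_sym e_irr nbr okf0 (leqnn _).
have [D [cD sD eD]] := build okg bg.
exists D; split => //.
apply/eqP; rewrite eqn_leq UB //= eD.
have := subset_leq_card cf0; rewrite minS0 => le1.
by apply: leq_sub2l; apply: leq_trans le1.
Qed.
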